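(* Let $V$ be a set of $n$ vertices and let $\mathcal{T}$ be a set (so no repeated members) of triangles on $V$ having no rainbow triangle. Then $|\mathcal{T}| \le \frac{n^2}{8}$.
   Context: A triangle on $V$ is a $3$-element subset $\{x,y,z\}\subseteq V$, identified with its edge set $\{\{x,y\},\{y,z\},\{x,z\}\}$. For a family $\mathcal{T}$ of triangles, a rainbow triangle is a triangle $\{x,y,z\}$ on $V$ together with three distinct members $t_1,t_2,t_3$ of $\mathcal{T}$ (distinct as members of the family) such that $\{x,y\}$ is an edge of $t_1$, $\{y,z\}$ is an edge of $t_2$ and $\{x,z\}$ is an edge of $t_3$. In other words, the three edges of $\{x,y,z\}$ can be taken, each from a different member of $\mathcal{T}$. *)

(* Defs.v *)
From mathcomp Require Import all_boot.
Set Implicit Arguments. Unset Strict Implicit. Unset Printing Implicit Defensive.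

Definition is_triangle (V : finType) (t : {set V}) : bool := #|t| == 3.

Definition edge_of (V : finType) (x y : V) (t : {set V}) : bool :=
  (x != y) && (x \in t) && (y \in t).

Definition has_rainbow_triangle (V : finType) (T : {set {set V}}) : Prop :=
  exists (x y z : V) (t1 t2 t3 : {set V}),
    [/\ [&& x != y, y != z & x != z],
        [&& t1 \in T, t2 \in T & t3 \in T],
        [&& t1 != t2, t2 != t3 & t1 != t3] &
        [&& edge_of x y t1, edge_of y z t2 & edge_of x z t3]].

(* Main.v *)
Require Import Defs.
From mathcomp Require Import all_boot.
Set Implicit Arguments. Unset Strict Implicit. Unset Printing Implicit Defensive.

Lemma tri_dec_at (V : finType) (t : {set V}) a : a \in t -> #|t| = 3 ->
  exists b c, [/\ a != b, b != c, a != c &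
     forall y, (y \in t) = [|| y == a, y == b | y == c]].
Proof.
move=> at_ h3.
have : #|t :\ a| == 2 by move: (cardsD1 a t); rewrite at_ h3 add1n => -[<-].
case/cards2P=> b [c [bc e]].
have hb : b \in t :\ a by rewrite e !inE eqxx.
have hc : c \in t :\ a by rewrite e !inE eqxx orbT.
move: hb hc; rewrite !inE => /andP[ba _] /andP[ca _].
exists b, c; split => //; first by rewrite eq_sym.
  by rewrite eq_sym.
move=> y; case: (eqVneq y a) => [->//|ya] /=.
have : (y \in t :\ a) = (y \in t) by rewrite !inE ya.
by move<-; rewrite e !inE.
Qed.

Lemma tri_dec (V : finType) (t : {set V}) : #|t| = 3 ->
  exists a b c, [/\ a != b, b != c, a != c &
     forall y, (y \in t) = [|| y == a, y == b | y == c]].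
Proof.
move=> h3; have : 0 < #|t| by rewrite h3.
case/card_gt0P=> a at_; case: (tri_dec_at at_ h3) => b [c h]; by exists a, b, c.
Qed.

Lemma edge_ofC (V : finType) (x y : V) t : edge_of x y t = edge_of y x t.
Proof. by rewrite /edge_of eq_sym; case: (x \in t); case: (y \in t); rewrite ?andbF. Qed.

Definition priv (V : finType) (T : {set {set V}}) (x y : V) (t : {set V}) :=
  edge_of x y t && [forall t' in T, edge_of x y t' ==> (t' == t)].
Definition apex (V : finType) (T : {set {set V}}) (v : V) (t : {set V}) :=
  (v \in t) && [forall y in t, (y != v) ==> priv T v y t].
Definition kept (V : finType) (T : {set {set V}}) (x y : V) (t : {set V}) :=
  priv T x y t && ((Some x == [pick v | apex T v t]) || (Some y == [pick v | apex T v t])).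
Definition rr (V : finType) (T : {set {set V}}) (x y : V) :=
  [exists t in T, kept T x y t].

Lemma privC (V : finType) (T : {set {set V}}) x y t : priv T x y t = priv T y x t.
Proof.
rewrite /priv edge_ofC; congr (_ && _); apply: eq_forallb => t'.
by rewrite edge_ofC.
Qed.

Lemma privE (V : finType) (T : {set {set V}}) x y t t' :
  priv T x y t -> t' \in T -> edge_of x y t' -> t' = t.
Proof.
by case/andP=> _ /forall_inP h tT e; apply/eqP; move: (h t' tT); rewrite e.
Qed.

Lemma privW (V : finType) (T : {set {set V}}) x y t : priv T x y t -> edge_of x y t.
Proof. by case/andP. Qed.

Lemma nonpriv (V : finType) (T : {set {set V}}) x y t :
  edge_of x y t -> ~~ priv T x y t -> exists t', [/\ t' \in T, edge_of x y t' & t' != t].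
Proof.
move=> e; rewrite /priv e /= negb_forall_in => /existsP[t' /andP[tT]].
by rewrite negb_imply => /andP[e' ne]; exists t'.
Qed.

Lemma two_nonpriv (V : finType) (T : {set {set V}}) t a b c :
  (forall t, t \in T -> is_triangle t) -> ~ has_rainbow_triangle T -> t \in T ->
  a != b -> b != c -> a != c ->
  (forall y, (y \in t) = [|| y == a, y == b | y == c]) ->
  ~~ priv T a b t -> ~~ priv T b c t -> False.
Proof.
move=> hT hR tT ab bc ac ht pab pbc.
have eab : edge_of a b t by rewrite /edge_of ab !ht !eqxx ?orbT.
have ebc : edge_of b c t by rewrite /edge_of bc !ht !eqxx ?orbT.
have eac : edge_of a c t by rewrite /edge_of ac !ht !eqxx ?orbT.
case: (nonpriv eab pab) => t1 [t1T e1 n1].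
case: (nonpriv ebc pbc) => t2 [t2T e2 n2].
have n12 : t1 != t2.
  apply/negP => /eqP e12; subst t2.
  have sub : t \subset t1.
    apply/subsetP => y; rewrite ht => /or3P[] /eqP ->.
    - by case/andP: e1 => /andP[].
    - by case/andP: e1.
    - by case/andP: e2.
  have : t == t1 by rewrite eqEcard sub (eqP (hT _ t1T)) (eqP (hT _ tT)).
  by rewrite eq_sym (negbTE n1).
apply: hR; exists a, b, c, t1, t2, t; split.
- by rewrite ab bc ac.
- by rewrite t1T t2T tT.
- by rewrite n12 n1 n2.
- by rewrite e1 e2 eac.
Qed.

Lemma apex_of (V : finType) (T : {set {set V}}) (t : {set V}) v u w :
  (forall y, (y \in t) = [|| y == v, y == u | y == w]) ->
  priv T v u t -> priv T v w t -> apex T v t.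
Proof.
move=> ht pu pw; apply/andP; split; first by rewrite ht eqxx.
apply/forall_inP => y; rewrite ht => /or3P[] /eqP ->; by rewrite ?eqxx ?pu ?pw ?implybT.
Qed.

Lemma apex_ex (V : finType) (T : {set {set V}}) t :
  (forall t, t \in T -> is_triangle t) -> ~ has_rainbow_triangle T -> t \in T ->
  exists v, apex T v t.
Proof.
move=> hT hR tT; case: (tri_dec (eqP (hT t tT))) => a [b [c [ab bc ac ht]]].
have ba : b != a by rewrite eq_sym.
have cb : c != b by rewrite eq_sym.
have ca : c != a by rewrite eq_sym.
have htb : forall y, (y \in t) = [|| y == b, y == c | y == a].
  by move=> y; rewrite ht; case: (y == a); case: (y == b); case: (y == c).
have htb' : forall y, (y \in t) = [|| y == b, y == a | y == c].
  by move=> y; rewrite ht; case: (y == a); case: (y == b); case: (y == c).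
have htc : forall y, (y \in t) = [|| y == c, y == a | y == b].
  by move=> y; rewrite ht; case: (y == a); case: (y == b); case: (y == c).
case pab: (priv T a b t).
  case pac: (priv T a c t); first by exists a; apply: (apex_of ht).
  case pbc: (priv T b c t).
    by exists b; apply: (apex_of htb'); rewrite // privC.
  by case: (two_nonpriv hT hR tT bc ca ba htb); rewrite ?pbc // privC pac.
case pbc: (priv T b c t).
  case pca: (priv T c a t).
    by exists c; apply: (apex_of htc); rewrite // privC.
  by case: (two_nonpriv hT hR tT ca ab cb htc); rewrite ?pca ?pab.
by case: (two_nonpriv hT hR tT ab bc ac ht); rewrite ?pab ?pbc.
Qed.

Lemma sum2 (V : finType) (f : V -> nat) u w : u != w -> f u + f w <= \sum_x f x.
Proof.
move=> uw; rewrite (bigD1 u) //= (bigD1 w) /=; first by rewrite addnA leq_addr.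
by rewrite eq_sym.
Qed.

Lemma kept_sum (V : finType) (T : {set {set V}}) t :
  (forall t, t \in T -> is_triangle t) -> ~ has_rainbow_triangle T -> t \in T ->
  4 <= \sum_x \sum_y (kept T x y t : nat).
Proof.
move=> hT hR tT.
have [m hp] : exists m, [pick v | apex T v t] = Some m.
  case: pickP => [m _|none]; first by exists m.
  by case: (apex_ex hT hR tT) => v; rewrite none.
have am : apex T m t by move: hp; case: pickP => // m' am' [<-].
case/andP: (am) => mt /forall_inP ha.
case: (tri_dec_at mt (eqP (hT t tT))) => u [w [mu uw mw ht]].
have pu : priv T m u t.
  by move: (ha u); rewrite ht eqxx orbT eq_sym mu => /(_ isT).
have pw : priv T m w t.
  by move: (ha w); rewrite ht eqxx !orbT eq_sym mw => /(_ isT).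
have kmu : kept T m u t by rewrite /kept pu hp eqxx.
have kmw : kept T m w t by rewrite /kept pw hp eqxx.
have kum : kept T u m t by rewrite /kept privC pu hp eqxx orbT.
have kwm : kept T w m t by rewrite /kept privC pw hp eqxx orbT.
have kmm : kept T m m t = false by rewrite /kept /priv /edge_of eqxx.
rewrite (bigD1 m) //= (_ : 4 = 2 + 2) //; apply: leq_add.
  by apply: leq_trans (sum2 (fun y => (kept T m y t : nat)) uw); rewrite /= kmu kmw.
apply: (@leq_trans (\sum_(x | x != m) (kept T x m t : nat))).
  have := sum2 (fun x => (kept T x m t : nat)) uw.
  by rewrite (bigD1 m) //= kmm add0n kum kwm.
apply: leq_sum => x _; rewrite (bigD1 m) //=; exact: leq_addr.
Qed.

Lemma keptC (V : finType) (T : {set {set V}}) x y t : kept T x y t = kept T y x t.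
Proof. by rewrite /kept privC orbC. Qed.

Lemma rrC (V : finType) (T : {set {set V}}) x y : rr T x y = rr T y x.
Proof. by apply: eq_existsb => t; rewrite keptC. Qed.

Lemma all_same (V : finType) (T : {set {set V}}) t x y z :
  x != y -> y != z -> x != z ->
  kept T x y t -> kept T y z t -> kept T x z t -> False.
Proof.
rewrite /kept; case: [pick v | apex T v t] => [m|]; last by rewrite !andbF.
have se : forall a : V, (Some a == Some m) = (a == m) by [].
rewrite !se => + + + /andP[_ +] /andP[_ +] /andP[_ +].
case: (eqVneq x m) => [?|_]; case: (eqVneq y m) => [?|_];
  case: (eqVneq z m) => [?|_]; subst; by rewrite ?eqxx.
Qed.

Lemma kept_le_rr (V : finType) (T : {set {set V}}) x y :
  \sum_(t in T) (kept T x y t : nat) <= rr T x y.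
Proof.
case hr: (rr T x y).
  case/exists_inP: hr => t0 t0T k0; rewrite (bigD1 t0) //= k0 big1 //.
  move=> t /andP[tT nt]; apply/eqP; rewrite eqb0; apply/negP => k.
  case/andP: k0 => p0 _; case/andP: k => p _.
  by move: nt; rewrite (privE p0 tT (privW p)) eqxx.
rewrite big1 // => t tT; apply/eqP; rewrite eqb0; apply/negP => k.
by move: hr; have -> : rr T x y by apply/exists_inP; exists t.
Qed.

Lemma rr_tf (V : finType) (T : {set {set V}}) x y z :
  ~ has_rainbow_triangle T -> rr T x y -> rr T x z -> rr T y z -> False.
Proof.
move=> hR /exists_inP[t1 t1T k1] /exists_inP[t3 t3T k3] /exists_inP[t2 t2T k2].
case/andP: (k1) => p1 _; case/andP: (k2) => p2 _; case/andP: (k3) => p3 _.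
have e1 := privW p1; have e2 := privW p2; have e3 := privW p3.
case/andP: (e1) => /andP[xy xt1] yt1.
case/andP: (e2) => /andP[yz yt2] zt2.
case/andP: (e3) => /andP[xz xt3] zt3.
have H12 : t1 != t2.
  apply/eqP => e; subst t2.
  have e' : t1 = t3 by apply: (privE p3 t1T); rewrite /edge_of xz xt1 zt2.
  subst t3; exact: (all_same xy yz xz k1 k2 k3).
have H23 : t2 != t3.
  apply/eqP => e; subst t3.
  have e' : t2 = t1 by apply: (privE p1 t2T); rewrite /edge_of xy xt3 yt2.
  subst t2; exact: (all_same xy yz xz k1 k2 k3).
have H13 : t1 != t3.
  apply/eqP => e; subst t3.
  have e' : t1 = t2 by apply: (privE p2 t1T); rewrite /edge_of yz yt1 zt3.
  by move: H12; rewrite e' eqxx.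
apply: hR; exists x, y, z, t1, t2, t3; split.
- by rewrite xy yz xz.
- by rewrite t1T t2T t3T.
- by rewrite H12 H23 H13.
- by rewrite e1 e2 e3.
Qed.
Lemma mantel (V : finType) (r : rel V) :
  (forall x y, r x y = r y x) ->
  (forall x y z, r x y -> r x z -> r y z -> False) ->
  2 * (\sum_x \sum_y (r x y : nat)) <= #|V| ^ 2.
Proof.
move=> sym tf.
set n := #|V|.
pose d x := \sum_y (r x y : nat).
have hn : \sum_(z : V) 1 = n by rewrite sum1_card.
have ha : forall x y, r x y -> d x + d y <= n.
  move=> x y rxy; rewrite /d -big_split /= -hn; apply: leq_sum => z _.
  case rxz: (r x z); case ryz: (r y z) => //.
  by case: (tf x y z rxy rxz ryz).
have hb : \sum_x \sum_y (r x y : nat) * (d x + d y) <= n * \sum_x d x.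
  rewrite big_distrr /=; apply: leq_sum => x _; rewrite /d big_distrr /=.
  apply: leq_sum => y _; case rxy: (r x y) => /=; rewrite ?mul0n ?muln0 ?mul1n ?muln1 //.
  exact: ha.
have hc : \sum_x \sum_y (r x y : nat) * (d x + d y) =
          \sum_x d x * d x + \sum_x d x * d x.
  under eq_bigr do under eq_bigr do rewrite mulnDr.
  under eq_bigr do rewrite big_split /=.
  rewrite big_split /=; congr (_ + _).
    by apply: eq_bigr => x _; rewrite /d big_distrl.
  rewrite exchange_big /=; apply: eq_bigr => y _.
  by rewrite -big_distrl /= /d; congr (_ * _); apply: eq_bigr => x _; rewrite sym.
set M := \sum_x d x; set S := \sum_x d x * d x.
have h1 : S + S <= n * M by rewrite -hc.
have eM : M * M = \sum_x \sum_y d x * d y.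
  by rewrite /M big_distrl /=; apply: eq_bigr => x _; rewrite big_distrr.
have eS1 : \sum_x \sum_(y : V) d x ^ 2 = n * S.
  rewrite /S big_distrr /=; apply: eq_bigr => x _.
  by rewrite sum_nat_const mulnn.
have eS2 : \sum_(x : V) \sum_(y : V) d y ^ 2 = n * S.
  rewrite sum_nat_const /S; congr (_ * _).
have h2 : 2 * (M * M) <= n * S + n * S.
  rewrite eM -{1}eS1 -eS2 -big_split big_distrr /=; apply: leq_sum => x _.
  rewrite -big_split big_distrr /=; apply: leq_sum => y _.
  by rewrite (nat_Cauchy (d x) (d y)).
case: (posnP M) => [->|Mp]; first by rewrite muln0.
rewrite -(leq_pmul2r Mp) -mulnA; apply: (leq_trans h2).
rewrite -mulnDr expnS expn1 -mulnA; exact: leq_mul (leqnn n) h1.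
Qed.

Theorem theorem2p1 (V : finType) (T : {set {set V}}) :
  (forall t, t \in T -> is_triangle t) ->
  ~ has_rainbow_triangle T ->
  8 * #|T| <= #|V| ^ 2.
Proof.
move=> hT hR.
have hM := mantel (rrC T) (fun x y z => rr_tf hR (x:=x) (y:=y) (z:=z)).
have h4 : 4 * #|T| <= \sum_x \sum_y (rr T x y : nat).
  rewrite mulnC -sum_nat_const.
  apply: (@leq_trans (\sum_(t in T) \sum_x \sum_y (kept T x y t : nat))).
    by apply: leq_sum => t tT; exact: kept_sum.
  rewrite exchange_big; apply: leq_sum => x _.
  rewrite exchange_big; apply: leq_sum => y _.
  exact: kept_le_rr.
apply: leq_trans hM; rewrite (_ : 8 = 2 * 4) // -mulnA leq_mul2l /=; exact: h4.
Qed.
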